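(* Let $\mathcal H$ be an infinite-dimensional complex Hilbert space. Then the generalized effect algebra $(\mathcal V_f(\mathcal H);\oplus,o)$ is monotone Dedekind downwards $\sigma$-complete.
   Context: Bilinear forms $t$ on $\mathcal H$ are sesquilinear maps $D(t)\times D(t)\to\mathbb C$ on a dense linear subspace $D(t)$ (linear in the first argument); $t$ is positive if $t(x,x)\ge0$ on $D(t)$, bounded if $\sup\{t(x,x)\mid x\in D(t),\|x\|=1\}<\infty$. The sum $t+s$ has domain $D(t)\cap D(s)$. $o$ is the zero form on $\mathcal H$. $\mathcal V_f(\mathcal H)$ is the set of positive bilinear forms with dense domain such that $D(t)=\mathcal H$ whenever $t$ is bounded; $t\oplus s$ is defined iff $t$ or $s$ is bounded or $D(t)=D(s)$, and then $t\oplus s=t+s$; this is a generalized effect algebra with induced order $t\le s$ iff $t\oplus r=s$ for some $r\in\mathcal V_f(\mathcal H)$. A generalized effect algebra is monotone Dedekind downwards $\sigma$-complete if every sequence $x_1\ge x_2\ge\cdots$ (in the induced order) has an infimum in it. *)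

(* Defs.v *)
From mathcomp Require Import all_boot all_algebra.
From mathcomp Require Import complex.
From mathcomp Require Import reals.
Set Implicit Arguments. Unset Strict Implicit. Unset Printing Implicit Defensive.
Import GRing.Theory Num.Theory.
Local Open Scope ring_scope.
Local Open Scope complex_scope.

(* Complex Hilbert space: an lmodType over C = R[i] (R : realType) with an
   inner product ip (linear in the first argument), complete for the induced
   norm. *)
Section Forms.
Variables (R : realType) (H : lmodType R[i]) (ip : H -> H -> R[i]).

Definition normH (x : H) : R[i] := sqrtC (ip x x).

Definition is_inner_product : Prop :=
  [/\ forall (a : R[i]) (x y z : H), ip (a *: x + y) z = a * ip x z + ip y z,
      forall x y : H, ip y x = (ip x y)^*%R,
      forall x : H, 0 <= ip x x
    & forall x : H, ip x x = 0 -> x = 0].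

Definition hilbert_complete : Prop :=
  forall u : nat -> H,
    (forall eps : R, 0 < eps -> exists N : nat, forall m n : nat,
        (N <= m)%N -> (N <= n)%N -> normH (u m - u n) < eps%:C) ->
    exists x : H, forall eps : R, 0 < eps -> exists N : nat, forall n : nat,
        (N <= n)%N -> normH (u n - x) < eps%:C.

Definition infinite_dimensional : Prop :=
  forall n : nat, exists v : 'I_n -> H, forall c : 'I_n -> R[i],
    \sum_(i < n) c i *: v i = 0 -> forall i, c i = 0.

(* A (candidate) bilinear form: a domain D(t) and the values of t; only the
   values on D(t) x D(t) are meaningful (see form_eq). *)
Record form := Form { dom : H -> Prop; fval : H -> H -> R[i] }.

Definition is_subspace (D : H -> Prop) : Prop :=
  D 0 /\ forall (a : R[i]) x y, D x -> D y -> D (a *: x + y).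

Definition dense (D : H -> Prop) : Prop :=
  forall (x : H) (eps : R), 0 < eps -> exists y, D y /\ normH (x - y) < eps%:C.

Definition is_form (t : form) : Prop :=
  [/\ is_subspace (dom t), dense (dom t),
      (forall (a : R[i]) x y z, dom t x -> dom t y -> dom t z ->
         fval t (a *: x + y) z = a * fval t x z + fval t y z)
    & (forall (a : R[i]) x y z, dom t x -> dom t y -> dom t z ->
         fval t x (a *: y + z) = (a^*)%R * fval t x y + fval t x z)].

Definition form_eq (t s : form) : Prop :=
  (forall x, dom t x <-> dom s x) /\
  (forall x y, dom t x -> dom t y -> fval t x y = fval s x y).

Definition positive_form (t : form) : Prop :=
  forall x, dom t x -> 0 <= fval t x x.

Definition bounded_form (t : form) : Prop :=
  exists M : R, forall x, dom t x -> ip x x = 1 -> fval t x x <= M%:C.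

Definition zero_form : form := Form (fun _ => True) (fun _ _ => 0).

Definition Vf (t : form) : Prop :=
  [/\ is_form t, positive_form t & (bounded_form t -> forall x, dom t x)].

Definition form_add (t s : form) : form :=
  Form (fun x => dom t x /\ dom s x) (fun x y => fval t x y + fval s x y).

Definition oplus_defined (t s : form) : Prop :=
  [\/ bounded_form t, bounded_form s | forall x, dom t x <-> dom s x].

Definition form_le (t s : form) : Prop :=
  exists r : form, [/\ Vf r, oplus_defined t r & form_eq (form_add t r) s].

Definition is_inf_Vf (u : nat -> form) (t0 : form) : Prop :=
  [/\ Vf t0, (forall n, form_le t0 (u n))
    & forall s, Vf s -> (forall n, form_le s (u n)) -> form_le s t0].

Definition monotone_downwards_sigma_complete : Prop :=
  forall u : nat -> form, (forall n, Vf (u n)) ->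
    (forall n, form_le (u n.+1) (u n)) -> exists t0, is_inf_Vf u t0.

End Forms.

(* Main.v *)
From Pilot Require Import Defs.
From mathcomp Require Import all_boot all_order all_algebra.
From mathcomp Require Import complex.
From mathcomp Require Import reals classical_sets boolp.
From mathcomp Require Import ring lra.
Set Implicit Arguments. Unset Strict Implicit. Unset Printing Implicit Defensive.
Import Order.TTheory GRing.Theory Num.Theory.
Local Open Scope ring_scope.
Local Open Scope complex_scope.
Notation cRe := (@complex.Re _).
Notation cIm := (@complex.Im _).
Local Open Scope classical_set_scope.
Section A.
Variable R : realType.
Implicit Types (z w : R[i]) (k : R).
Lemma ReD z w : cRe (z + w) = cRe z + cRe w. Proof. by case: z => ? ?; case: w => ? ?. Qed.
Lemma ImD z w : cIm (z + w) = cIm z + cIm w. Proof. by case: z => ? ?; case: w => ? ?. Qed.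
Lemma ReN z : cRe (- z) = - cRe z. Proof. by case: z => ? ?. Qed.
Lemma ImN z : cIm (- z) = - cIm z. Proof. by case: z => ? ?. Qed.
Lemma ReB z w : cRe (z - w) = cRe z - cRe w. Proof. by rewrite ReD ReN. Qed.
Lemma ImB z w : cIm (z - w) = cIm z - cIm w. Proof. by rewrite ImD ImN. Qed.
Lemma ReM z w : cRe (z * w) = cRe z * cRe w - cIm z * cIm w. Proof. by case: z => ? ?; case: w => ? ?. Qed.
Lemma ImM z w : cIm (z * w) = cRe z * cIm w + cIm z * cRe w. Proof. by case: z => a b; case: w => c d /=; ring. Qed.
Lemma ReC k : cRe (k%:C) = k. Proof. by []. Qed.
Lemma ImC k : cIm (k%:C) = 0. Proof. by []. Qed.
Lemma Re0 : cRe (0 : R[i]) = 0. Proof. by []. Qed.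
Lemma Im0 : cIm (0 : R[i]) = 0. Proof. by []. Qed.
Lemma ge0E z : (0 <= z) = (cIm z == 0) && (0 <= cRe z).
Proof. by rewrite lecE /= eq_sym. Qed.
Lemma ge0_real z : 0 <= z -> z = (cRe z)%:C.
Proof. by case: z => a b; rewrite ge0E /= => /andP[/eqP -> _]. Qed.
Lemma complex_ext z w : cRe z = cRe w -> cIm z = cIm w -> z = w.
Proof. by case: z; case: w => ? ? ? ? /= -> ->. Qed.
Lemma i_conj : (('i : R[i])^*)%R = - 'i. Proof. by apply: complex_ext => /=; rewrite ?oppr0. Qed.
Lemma i_conjN : ((- 'i : R[i])^*)%R = 'i. Proof. by apply: complex_ext => /=; rewrite ?oppr0 ?opprK. Qed.
Lemma conjC_Re k : ((k%:C : R[i])^*)%R = k%:C. Proof. by apply: complex_ext => //=; rewrite oppr0. Qed.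
End A.
Section B.
Variable R : realType.
Implicit Types (z w : R[i]) (k e : R).

Lemma absP (x e : R) : (`|x| < e) <-> (- e < x /\ x < e).
Proof. by rewrite ltr_norml; split => [/andP[]|[-> ->]]. Qed.

Definition near z w e := `|cRe z - cRe w| < e /\ `|cIm z - cIm w| < e.

Lemma near_refl z e : 0 < e -> near z z e.
Proof. by move=> e0; rewrite /near !subrr normr0. Qed.

Lemma near_sym z w e : near z w e -> near w z e.
Proof. by rewrite /near -(normrN (cRe w - _)) -(normrN (cIm w - _)) !opprB. Qed.

Lemma near_trans a b c e1 e2 : near a b e1 -> near b c e2 -> near a c (e1 + e2).
Proof.
rewrite /near => -[/absP h1 /absP h2] [/absP h3 /absP h4].
split; apply/absP; lra.
Qed.

Lemma near_add z1 w1 z2 w2 e1 e2 : near z1 w1 e1 -> near z2 w2 e2 ->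
  near (z1 + z2) (w1 + w2) (e1 + e2).
Proof.
rewrite /near !ReD !ImD => -[/absP h1 /absP h2] [/absP h3 /absP h4].
split; apply/absP; lra.
Qed.

Lemma near_opp z w e : near z w e -> near (- z) (- w) e.
Proof.
rewrite /near !ReN !ImN => -[/absP h1 /absP h2].
split; apply/absP; lra.
Qed.

Lemma near_mono z w e1 e2 : e1 <= e2 -> near z w e1 -> near z w e2.
Proof. by move=> le [h1 h2]; split; apply: lt_le_trans le. Qed.

Definition cK (a : R[i]) := `|cRe a| + `|cIm a| + 1.

Lemma cK_gt0 a : 0 < cK a.
Proof. by rewrite /cK; apply: ltr_wpDl => //; apply: addr_ge0. Qed.

Lemma near_scale a z w e : 0 < e -> near z w e -> near (a * z) (a * w) (cK a * e).
Proof.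
move=> e0 [h1 h2].
have key : forall p q : R, `|p| < e -> `|q| < e ->
   `|cRe a * p - cIm a * q| < cK a * e /\ `|cRe a * q + cIm a * p| < cK a * e.
  move=> p q hp hq.
  have hp' := ltW hp; have hq' := ltW hq.
  have A1 : `|cRe a * p| <= `|cRe a| * e by rewrite normrM; apply: ler_wpM2l.
  have A2 : `|cIm a * q| <= `|cIm a| * e by rewrite normrM; apply: ler_wpM2l.
  have A3 : `|cRe a * q| <= `|cRe a| * e by rewrite normrM; apply: ler_wpM2l.
  have A4 : `|cIm a * p| <= `|cIm a| * e by rewrite normrM; apply: ler_wpM2l.
  have E : cK a * e = `|cRe a| * e + `|cIm a| * e + e by rewrite /cK; ring.
  rewrite E; split.
    apply: le_lt_trans (ler_normB _ _) _.
    by apply: ltr_pwDr => //; apply: lerD.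
  apply: le_lt_trans (ler_normD _ _) _.
  by apply: ltr_pwDr => //; apply: lerD.
rewrite /near.
have -> : cRe (a * z) - cRe (a * w) = cRe a * (cRe z - cRe w) - cIm a * (cIm z - cIm w).
  by rewrite !ReM; ring.
have -> : cIm (a * z) - cIm (a * w) = cRe a * (cIm z - cIm w) + cIm a * (cRe z - cRe w).
  by rewrite !ImM; ring.
by have [k1 k2] := key _ _ h1 h2; split.
Qed.

Lemma le_eps (x y : R) : (forall e, 0 < e -> x <= y + e) -> x <= y.
Proof.
move=> h; case: (lerP x y) => // yx.
have e0 : 0 < (x - y) / 2 by lra.
have := h _ e0; lra.
Qed.

Lemma small0 (x : R) : (forall e, 0 < e -> `|x| < e) -> x = 0.
Proof.
move=> h; apply/eqP; rewrite -normr_eq0; apply/eqP.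
apply/le_anti; rewrite normr_ge0 andbT.
apply: le_eps => e e0; rewrite add0r; exact/ltW/h.
Qed.

Lemma near_eq z w : (forall e, 0 < e -> near z w e) -> z = w.
Proof.
move=> h; apply: complex_ext; apply/eqP; rewrite -subr_eq0; apply/eqP;
  apply: small0 => e e0; by case: (h e e0).
Qed.

Lemma near_ge0 z : (forall e, 0 < e -> exists w, 0 <= w /\ near z w e) -> 0 <= z.
Proof.
move=> h; rewrite ge0E; apply/andP; split.
  apply/eqP; apply: small0 => e e0; have [w [w0 [_ h2]]] := h e e0.
  by move: w0; rewrite ge0E => /andP[/eqP w0 _]; rewrite w0 subr0 in h2.
apply: le_eps => e e0.
have [w [w0 [h1 _]]] := h e e0; move: w0; rewrite ge0E => /andP[_ w0].
move/absP: h1 => h1; apply/ltW; lra.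
Qed.

Definition polarR (r1 r2 r3 r4 : R) : R[i] := ((r1 - r2) / 4) +i* ((r3 - r4) / 4).

Lemma polar_near r1 r2 r3 r4 s1 s2 s3 s4 e :
  `|r1 - s1| < e -> `|r2 - s2| < e -> `|r3 - s3| < e -> `|r4 - s4| < e ->
  near (polarR r1 r2 r3 r4) (polarR s1 s2 s3 s4) e.
Proof.
move=> /absP h1 /absP h2 /absP h3 /absP h4; rewrite /near /=.
split; apply/absP; lra.
Qed.


Lemma near_le z c : (forall e, 0 < e -> exists w, w <= c /\ near z w e) -> z <= c.
Proof.
move=> h; rewrite -subr_ge0; apply: near_ge0 => e e0.
have [w [wc [h1 h2]]] := h e e0; exists (c - w); split; first by rewrite subr_ge0.
rewrite /near !ReB !ImB.
have -> : cRe c - cRe z - (cRe c - cRe w) = - (cRe z - cRe w) by ring.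
have -> : cIm c - cIm z - (cIm c - cIm w) = - (cIm z - cIm w) by ring.
by rewrite !normrN.
Qed.

Lemma near_lin X Y1 Y2 a :
  (forall e, 0 < e -> exists p q1 q2,
     [/\ near X p e, near Y1 q1 e, near Y2 q2 e & p = a * q1 + q2]) ->
  X = a * Y1 + Y2.
Proof.
move=> h; apply: near_eq => e e0.
have k0 := cK_gt0 a.
have k2 : 0 < cK a + 2 by lra.
set e' := e / (cK a + 2).
have e'0 : 0 < e' by rewrite /e' divr_gt0.
have [p [q1 [q2 [h1 h2 h3 hp]]]] := h e' e'0.
rewrite hp in h1.
have h4 := near_scale a e'0 (near_sym h2).
have h5 := near_add h4 (near_sym h3).
have h6 := near_trans h1 h5.
apply: near_mono h6; rewrite le_eqVlt; apply/orP; left; apply/eqP.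
rewrite /e'; field; rewrite gt_eqF //.
Qed.

Lemma near_real (a b e : R) : `|a - b| < e -> 0 < e -> near a%:C b%:C e.
Proof. by move=> h e0; split => //=; rewrite subrr normr0. Qed.

Lemma Re_le z w : z <= w -> cRe z <= cRe w.
Proof. by rewrite lecE => /andP[]. Qed.

Lemma near_subr z w c e : near z w e -> near (z - c) (w - c) e.
Proof.
rewrite /near !ReB !ImB.
have -> : cRe z - cRe c - (cRe w - cRe c) = cRe z - cRe w by ring.
by have -> : cIm z - cIm c - (cIm w - cIm c) = cIm z - cIm w by ring.
Qed.

End B.
Section C.
Variables (R : realType) (H : lmodType R[i]).
Implicit Types (D : H -> Prop) (f : H -> H -> R[i]).

Definition sesq D f :=
 [/\ is_subspace D,
   (forall (a : R[i]) x y z, D x -> D y -> D z -> f (a *: x + y) z = a * f x z + f y z)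
 & (forall (a : R[i]) x y z, D x -> D y -> D z -> f x (a *: y + z) = (a^*)%R * f x y + f x z)].

Definition posf D f := forall x, D x -> 0 <= f x x.
Definition Qf f x := cRe (f x x).

Section Sub.
Variable D : H -> Prop.
Hypothesis hD : is_subspace D.
Lemma D0 : D 0. Proof. by case: hD. Qed.
Lemma DZD a x y : D x -> D y -> D (a *: x + y). Proof. by case: hD => _; apply. Qed.
Lemma DD x y : D x -> D y -> D (x + y).
Proof. by move=> hx hy; have := DZD 1 hx hy; rewrite scale1r. Qed.
Lemma DZ a x : D x -> D (a *: x).
Proof. by move=> hx; have := DZD a hx D0; rewrite addr0. Qed.
Lemma DN x : D x -> D (- x).
Proof. by move=> hx; rewrite -scaleN1r; apply: DZ. Qed.
Lemma DB x y : D x -> D y -> D (x - y).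
Proof. by move=> hx hy; apply: DD => //; apply: DN. Qed.
End Sub.

Section Sesq.
Variables (D : H -> Prop) (f : H -> H -> R[i]).
Hypothesis hf : sesq D f.
Let hD : is_subspace D. Proof. by case: hf. Qed.
Let D0' := D0 hD.
Lemma fZDl a x y z : D x -> D y -> D z -> f (a *: x + y) z = a * f x z + f y z.
Proof. by case: hf => _ h _; apply: h. Qed.
Lemma fZDr a x y z : D x -> D y -> D z -> f x (a *: y + z) = (a^*)%R * f x y + f x z.
Proof. by case: hf => _ _ h; apply: h. Qed.
Lemma f0l z : D z -> f 0 z = 0.
Proof.
move=> hz; have := fZDl (-1) D0' D0' hz; rewrite scaler0 addr0.
by rewrite mulN1r addNr.
Qed.
Lemma f0r z : D z -> f z 0 = 0.
Proof.
move=> hz; have := fZDr (-1) hz D0' D0'; rewrite scaler0 addr0.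
by rewrite rmorphN rmorph1 mulN1r addNr.
Qed.
Lemma fDl x y z : D x -> D y -> D z -> f (x + y) z = f x z + f y z.
Proof. by move=> hx hy hz; rewrite -{1}(scale1r x) fZDl // mul1r. Qed.
Lemma fZl a x z : D x -> D z -> f (a *: x) z = a * f x z.
Proof. by move=> hx hz; rewrite -(addr0 (a *: x)) fZDl // f0l // addr0. Qed.
Lemma fDr x y z : D x -> D y -> D z -> f x (y + z) = f x y + f x z.
Proof. by move=> hx hy hz; rewrite -{1}(scale1r y) fZDr // rmorph1 mul1r. Qed.
Lemma fZr a x y : D x -> D y -> f x (a *: y) = (a^*)%R * f x y.
Proof. by move=> hx hy; rewrite -(addr0 (a *: y)) fZDr // f0r // addr0. Qed.

Lemma fexp2 c x y : D x -> D y ->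
  f (x + c *: y) (x + c *: y) = f x x + (c^*)%R * f x y + c * f y x + c * (c^*)%R * f y y.
Proof.
move=> hx hy; have hcy := DZ hD c hy; have hs := DD hD hx hcy.
rewrite fDl // fDr // fDr // fZr // fZl // fZl // fZr //; ring.
Qed.

Hypothesis hp : posf D f.

Lemma fxx_real x : D x -> f x x = (Qf f x)%:C.
Proof. by move=> hx; apply: ge0_real; apply: hp. Qed.

Lemma Qf_ge0 x : D x -> 0 <= Qf f x.
Proof. by move=> hx; have := hp hx; rewrite ge0E => /andP[]. Qed.

Lemma Im_fxx x : D x -> cIm (f x x) = 0.
Proof. by move=> hx; have := hp hx; rewrite ge0E => /andP[/eqP]. Qed.

Lemma polar_id x y : D x -> D y ->
  f x y = polarR (Qf f (x + y)) (Qf f (x - y)) (Qf f (x + 'i *: y)) (Qf f (x - 'i *: y)).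
Proof.
move=> hx hy.
have e1 := fexp2 1 hx hy. rewrite scale1r rmorph1 !mul1r in e1.
have e2 := fexp2 (-1) hx hy. rewrite scaleN1r rmorphN rmorph1 in e2.
have e3 := fexp2 'i%C hx hy. rewrite i_conj in e3.
have e4 := fexp2 (- 'i%C) hx hy. rewrite i_conjN scaleNr in e4.
have i1 := Im_fxx (DD hD hx hy). have i2 := Im_fxx (DB hD hx hy).
have i3 := Im_fxx (DD hD hx (DZ hD 'i hy)). have i4 := Im_fxx (DB hD hx (DZ hD 'i hy)).
have ix := Im_fxx hx; have iy := Im_fxx hy.
apply: complex_ext; rewrite /Qf e1 e2 e3 e4 in i1 i2 i3 i4 * => /=;
move: i1 i2 i3 i4; rewrite !ReD !ImD !ReM !ImM /= ix iy => i1 i2 i3 i4; lra.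
Qed.

Lemma Q_par x y : D x -> D y -> Qf f (x + y) + Qf f (x - y) = 2 * Qf f x + 2 * Qf f y.
Proof.
move=> hx hy.
have e1 := fexp2 1 hx hy. rewrite scale1r rmorph1 !mul1r in e1.
have e2 := fexp2 (-1) hx hy. rewrite scaleN1r rmorphN rmorph1 in e2.
rewrite /Qf e1 e2 !ReD !ReM /=; lra.
Qed.

Lemma Q_add_le x y : D x -> D y -> Qf f (x + y) <= 2 * Qf f x + 2 * Qf f y.
Proof.
move=> hx hy; have := Q_par hx hy; have := Qf_ge0 (DB hD hx hy); lra.
Qed.

Lemma QZ a x : D x -> Qf f (a *: x) = (cRe a ^+ 2 + cIm a ^+ 2) * Qf f x.
Proof.
move=> hx; rewrite /Qf fZl ?fZr //; last exact: DZ.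
rewrite (fxx_real hx) /Qf; case: a => p q /=; ring.
Qed.

Lemma QN x : D x -> Qf f (- x) = Qf f x.
Proof. by move=> hx; rewrite -scaleN1r QZ //=; ring. Qed.

Lemma Q_osc mu a b : D a -> D b -> 0 < mu ->
  mu * (Qf f a - Qf f b) <= mu ^+ 2 * Qf f b + (mu + 1) * Qf f (a - b).
Proof.
move=> ha hb mu0; set d := a - b.
have hd : D d by apply: DB.
have ea : a = b + 1 *: d by rewrite scale1r /d addrC subrK.
have e1 := fexp2 1 hb hd. rewrite -ea rmorph1 !mul1r in e1.
have hmb := DZ hD (mu%:C) hb.
have e2 := fexp2 (-1) hmb hd.
rewrite scaleN1r rmorphN rmorph1 fZl ?fZr // conjC_Re (fZl _ hb hd) in e2.
have p2 := Qf_ge0 (DB hD hmb hd).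
rewrite /Qf [f a a]e1 in p2 *.
rewrite [f (mu%:C *: b - d) _]e2 in p2.
move: p2; rewrite (fxx_real hb) (fxx_real hd) !ReD !ReM /= ?ReM /=.
have := Qf_ge0 hb; have := Qf_ge0 hd; rewrite /Qf.
move: (cRe (f b b)) (cRe (f d d)) (cRe (f b d)) (cRe (f d b)) => qb qd p r.
move=> *; nra.
Qed.

End Sesq.
End C.
Section D.
Variables (R : realType) (H : lmodType R[i]) (ip : H -> H -> R[i]).
Hypothesis hip : is_inner_product ip.

Definition TT : H -> Prop := fun _ => True.
Lemma TT_sub : is_subspace TT. Proof. by []. Qed.

Lemma ip_sesq : sesq TT ip.
Proof.
case: hip => l1 hs _ _; split => //.
move=> a x y z _ _ _.
rewrite hs l1 rmorphD rmorphM /= -!hs //.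
Qed.

Lemma ip_pos : posf TT ip.
Proof. by case: hip => _ _ h _ x _; apply: h. Qed.

Definition ipr := Qf ip.

Lemma ipr_ge0 x : 0 <= ipr x. Proof. exact: (Qf_ge0 ip_pos). Qed.
Lemma ip_real x : ip x x = (ipr x)%:C. Proof. exact: (fxx_real ip_pos). Qed.
Lemma ipr_add x y : ipr (x + y) <= 2 * ipr x + 2 * ipr y.
Proof. exact: (Q_add_le ip_sesq ip_pos). Qed.
Lemma iprZ a x : ipr (a *: x) = (cRe a ^+ 2 + cIm a ^+ 2) * ipr x.
Proof. exact: (QZ ip_sesq ip_pos). Qed.
Lemma iprN x : ipr (- x) = ipr x.
Proof. exact: (QN ip_sesq ip_pos). Qed.
Lemma ipr0 : ipr 0 = 0.
Proof. by rewrite /ipr /Qf (f0l ip_sesq). Qed.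
Lemma ipr_eq0 x : ipr x = 0 -> x = 0.
Proof. by case: hip => _ _ _ h e; apply: h; rewrite ip_real e. Qed.
Lemma iprB_sym x y : ipr (x - y) = ipr (y - x).
Proof. by rewrite -iprN opprB. Qed.
Lemma ipr_tri a b x : ipr (a - b) <= 2 * ipr (a - x) + 2 * ipr (x - b).
Proof. by have := ipr_add (a - x) (x - b); rewrite addrA subrK. Qed.

Lemma ipr_comb c x y a b : cRe c ^+ 2 + cIm c ^+ 2 = 1 ->
  ipr ((x + c *: y) - (a + c *: b)) <= 2 * ipr (x - a) + 2 * ipr (y - b).
Proof.
move=> hc.
have -> : (x + c *: y) - (a + c *: b) = (x - a) + c *: (y - b).
  by rewrite scalerBr opprD addrACA.
by have := ipr_add (x - a) (c *: (y - b)); rewrite iprZ hc mul1r.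
Qed.

Lemma ipr_combZ c x y a b :
  ipr ((c *: x + y) - (c *: a + b)) <=
    2 * (cRe c ^+ 2 + cIm c ^+ 2) * ipr (x - a) + 2 * ipr (y - b).
Proof.
have -> : (c *: x + y) - (c *: a + b) = c *: (x - a) + (y - b).
  by rewrite scalerBr opprD addrACA.
by have := ipr_add (c *: (x - a)) (y - b); rewrite iprZ mulrA.
Qed.

Lemma normH_lt x e : 0 < e -> normH ip x < e%:C -> ipr x < e ^+ 2.
Proof.
move=> e0; rewrite /normH ip_real => h.
have s0 : 0 <= sqrtC (ipr x)%:C by rewrite sqrtC_ge0 ler0c ipr_ge0.
have : sqrtC (ipr x)%:C ^+ 2 < e%:C ^+ 2.
  by rewrite ltr_pXn2r // nnegrE ler0c ltW.
by rewrite sqrtCK -rmorphXn ltcR.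
Qed.

Lemma dense_ipr (Dm : H -> Prop) : dense ip Dm ->
  forall x d, 0 < d -> exists a, Dm a /\ ipr (x - a) < d.
Proof.
move=> hd x d d0.
have s0 : 0 < Num.sqrt d by rewrite sqrtr_gt0.
have [a [ha hn]] := hd x _ s0; exists a; split => //.
by have := normH_lt s0 hn; rewrite sqr_sqrtr // ltW.
Qed.

Lemma normH0 : normH ip 0 = 0.
Proof. by rewrite /normH ip_real ipr0 sqrtC0. Qed.

End D.
Section E.
Variables (R : realType) (H : lmodType R[i]) (ip : H -> H -> R[i]).
Hypothesis hip : is_inner_product ip.
Variables (D : H -> Prop) (f : H -> H -> R[i]).
Hypotheses (hf : sesq D f) (hp : posf D f).
Let hD : is_subspace D. Proof. by case: hf. Qed.
Local Notation ipr := (ipr ip).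

Lemma Qf0 : Qf f 0 = 0.
Proof. by rewrite /Qf (f0l hf) //; exact: (D0 hD). Qed.

Lemma bnd_of : (exists M : R, forall x, D x -> ip x x = 1 -> f x x <= M%:C) ->
  exists M, 0 < M /\ forall x, D x -> Qf f x <= M * ipr x.
Proof.
case=> M hM; exists (`|M| + 1); split; first by apply: ltr_pwDr => //.
move=> x hx.
have [r0|rpos] := eqVneq (ipr x) 0.
  by rewrite (ipr_eq0 hip r0) Qf0 (ipr0 hip) mulr0.
have rgt : 0 < ipr x by rewrite lt_def rpos ipr_ge0.
set c := (Num.sqrt (ipr x))^-1.
have sq : Num.sqrt (ipr x) ^+ 2 = ipr x by rewrite sqr_sqrtr // ipr_ge0.
have sp : 0 < Num.sqrt (ipr x) by rewrite sqrtr_gt0.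
have c2 : c ^+ 2 * ipr x = 1 by rewrite /c exprVn sq mulVf // gt_eqF.
have hy := DZ hD (c%:C) hx.
have h1 : ip (c%:C *: x) (c%:C *: x) = 1.
  by rewrite (ip_real hip) (iprZ hip) /= expr0n /= addr0 c2.
have := hM _ hy h1; rewrite (fxx_real hp hy) lecR (QZ hf hp) //= expr0n /= addr0.
move=> hq.
have hQ := Qf_ge0 hp hx.
have : Qf f x = ipr x * (c ^+ 2 * Qf f x) by rewrite mulrA (mulrC (ipr x)) c2 mul1r.
move=> ->.
have hMM : M <= `|M| + 1 by apply: le_trans (ler_norm M) _; rewrite lerDl.
rewrite mulrC; apply: ler_pM => //; first by apply: mulr_ge0 => //; apply: exprn_ge0; rewrite invr_ge0 ltW.
  exact: ipr_ge0.
exact: le_trans hq hMM.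
Qed.

Lemma bnd_to : (exists M : R, forall x, D x -> Qf f x <= M * ipr x) ->
  exists M : R, forall x, D x -> ip x x = 1 -> f x x <= M%:C.
Proof.
case=> M hM; exists M => x hx h1.
have e1 : ipr x = 1 by rewrite /ipr /Qf h1.
by rewrite (fxx_real hp hx) lecR; have := hM _ hx; rewrite e1 mulr1.
Qed.

Variables (M : R).
Hypotheses (M0 : 0 < M) (hM : forall x, D x -> Qf f x <= M * ipr x).

Lemma osc x eps : 0 < eps -> exists d, [/\ 0 < d, d <= 1 &
  forall a b, D a -> D b -> ipr (x - a) < d -> ipr (x - b) < d -> `|Qf f a - Qf f b| < eps].
Proof.
move=> e0.
set K := M * (2 * ipr x + 2) + 1.
have K0 : 0 < K by rewrite /K; apply: ltr_pwDr => //; apply: mulr_ge0; [exact: ltW|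
  apply: addr_ge0 => //; apply: mulr_ge0 => //; exact: ipr_ge0].
set mu := eps / (4 * K).
have mu0 : 0 < mu by rewrite /mu; apply: divr_gt0 => //; exact: mulr_gt0.
have muK : mu * K = eps / 4 by rewrite /mu; field; rewrite gt_eqF.
set d0 := mu * eps / (8 * M * (mu + 1)).
have mu1 : 0 < mu + 1 by lra.
have d00 : 0 < d0 by rewrite /d0; apply: divr_gt0; [exact: mulr_gt0 | apply: mulr_gt0 => //; exact: mulr_gt0].
have d0E : 4 * M * d0 * (mu + 1) = mu * eps / 2.
  by rewrite /d0; field; rewrite !gt_eqF.
set d := Num.min 1 d0.
have d0' : 0 < d by rewrite /d lt_min ltr01 d00.
have d1 : d <= 1 by rewrite /d ge_min lexx.
have dd0 : d <= d0 by rewrite /d ge_min lexx orbT.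
have one : forall a b, D a -> D b -> ipr (x - a) < d -> ipr (x - b) < d ->
    Qf f a - Qf f b < eps.
  move=> a b ha hb hxa hxb.
  have hbK : Qf f b <= K.
    have := ipr_add hip x (b - x); rewrite addrC subrK -(iprB_sym hip x b) => ib.
    have ib2 : ipr b <= 2 * ipr x + 2 by lra.
    have := hM hb; have := ler_wpM2l (ltW M0) ib2; rewrite /K; lra.
  have hab : Qf f (a - b) <= 4 * M * d.
    have := ipr_tri hip a b x; rewrite -(iprB_sym hip x a) => it.
    have it2 : ipr (a - b) <= 4 * d by lra.
    have := hM (DB hD ha hb); have := ler_wpM2l (ltW M0) it2; lra.
  have ho := Q_osc hf hp ha hb mu0.
  have hQb := Qf_ge0 hp hb.
  have hQab := Qf_ge0 hp (DB hD ha hb).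
  have h1 : mu ^+ 2 * Qf f b <= mu ^+ 2 * K by apply: ler_wpM2l => //; apply: exprn_ge0; apply: ltW.
  have h1' : mu ^+ 2 * K = mu * eps / 4 by rewrite expr2 -mulrA muK mulrA.
  have h2 : (mu + 1) * Qf f (a - b) <= (mu + 1) * (4 * M * d) by apply: ler_wpM2l => //; apply: ltW.
  have h3 : 4 * M * d <= 4 * M * d0 by apply: ler_wpM2l => //; apply: mulr_ge0 => //; apply: ltW.
  have h3' : (mu + 1) * (4 * M * d) <= (mu + 1) * (4 * M * d0) by apply: ler_wpM2l => //; apply: ltW.
  have h4 : 0 < mu * eps by apply: mulr_gt0.
  have : mu * (Qf f a - Qf f b) < mu * eps.
    rewrite mulrC in d0E; lra.
  by rewrite ltr_pM2l.
exists d; split => // a b ha hb hxa hxb.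
apply/absP; split; last exact: one.
have := one _ _ hb ha hxb hxa; lra.
Qed.

End E.
Section F.
Variables (R : realType) (H : lmodType R[i]) (ip : H -> H -> R[i]).
Local Notation ipr := (ipr ip).
Variables (D : H -> Prop) (f : H -> H -> R[i]).

Definition Qe x := inf [set s : R | exists d, 0 < d /\
   forall a, D a -> ipr (x - a) < d -> Qf f a <= s].

Definition extf x y := polarR (Qe (x + y)) (Qe (x - y)) (Qe (x + 'i%C *: y)) (Qe (x - 'i%C *: y)).

Hypothesis hip : is_inner_product ip.
Hypotheses (hf : sesq D f) (hp : posf D f).
Let hD : is_subspace D. Proof. by case: hf. Qed.
Hypothesis hdense : forall x d, 0 < d -> exists a, D a /\ ipr (x - a) < d.
Variables (M : R).
Hypotheses (M0 : 0 < M) (hM : forall x, D x -> Qf f x <= M * ipr x).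

Lemma Qe_approx x eps : 0 < eps -> exists d, 0 < d /\
  forall a, D a -> ipr (x - a) < d -> `|Qf f a - Qe x| < eps.
Proof.
move=> e0.
have e2 : 0 < eps / 2 by rewrite divr_gt0.
have [d0 [d00 _ hosc]] := osc hip hf hp M0 hM x e2.
exists d0; split => // a ha hxa.
set S := [set s : R | exists d, 0 < d /\ forall a, D a -> ipr (x - a) < d -> Qf f a <= s].
have inS : S (Qf f a + eps / 2).
  exists d0; split => // a' ha' hxa'.
  have := hosc _ _ ha' ha hxa' hxa; move/absP; lra.
have lbS : lbound S (Qf f a - eps / 2).
  move=> s [d [d0' hs]].
  have dm : 0 < Num.min d d0 by rewrite lt_min d0' d00.
  have [b [hb hxb]] := hdense x dm.
  have hxb1 : ipr (x - b) < d by apply: lt_le_trans hxb _; rewrite ge_min lexx.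
  have hxb2 : ipr (x - b) < d0 by apply: lt_le_trans hxb _; rewrite ge_min lexx orbT.
  have := hs _ hb hxb1; have := hosc _ _ hb ha hxb2 hxa; move/absP; lra.
have h1 : Qe x <= Qf f a + eps / 2.
  by apply: (ge_inf (ex_intro _ _ lbS)).
have h2 : Qf f a - eps / 2 <= Qe x.
  by apply: lb_le_inf => //; exact: (ex_intro _ _ inS).
apply/absP; lra.
Qed.

Lemma ext_approx x y eps : 0 < eps -> exists d, 0 < d /\
  forall a b, D a -> D b -> ipr (x - a) < d -> ipr (y - b) < d ->
    near (f a b) (extf x y) eps.
Proof.
move=> e0.
have [d1 [d10 h1]] := Qe_approx (x + 1 *: y) e0.
have [d2 [d20 h2]] := Qe_approx (x + (-1) *: y) e0.
have [d3 [d30 h3]] := Qe_approx (x + 'i%C *: y) e0.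
have [d4 [d40 h4]] := Qe_approx (x + (- 'i%C) *: y) e0.
set d := Num.min (Num.min d1 d2) (Num.min d3 d4) / 4.
have dm0 : 0 < Num.min (Num.min d1 d2) (Num.min d3 d4) by rewrite !lt_min d10 d20 d30 d40.
have d0 : 0 < d by rewrite /d divr_gt0.
have dle : forall k, k = d1 \/ k = d2 \/ k = d3 \/ k = d4 -> 4 * d <= k.
  move=> k hk; rewrite /d mulrC divfK ?pnatr_eq0 //.
  by case: hk => [->|[->|[->|->]]]; rewrite !ge_min lexx ?orbT.
exists d; split => // a b ha hb hxa hyb.
rewrite (polar_id hf hp ha hb) /extf.
have key : forall c dk, cRe c ^+ 2 + cIm c ^+ 2 = 1 -> 4 * d <= dk ->
    ipr ((x + c *: y) - (a + c *: b)) < dk.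
  move=> c dk hc hdk; apply: le_lt_trans (ipr_comb hip x y a b hc) _; lra.
have hcb : forall c, D (a + c *: b) by move=> c; apply: DD => //; apply: DZ.
apply: polar_near.
- have := h1 _ (hcb 1) (key 1 d1 _ (dle _ _)); rewrite !scale1r; apply => //=.
  + by simpl; ring.
  + by left.
- have := h2 _ (hcb (-1)) (key (-1) d2 _ (dle _ _)); rewrite !scaleN1r; apply => //=.
  + by simpl; ring.
  + by right; left.
- have := h3 _ (hcb 'i%C) (key 'i%C d3 _ (dle _ _)); apply => //=.
  + by simpl; ring.
  + by right; right; left.
- have := h4 _ (hcb (- 'i%C)) (key (- 'i%C) d4 _ (dle _ _)); rewrite !scaleNr; apply => //=.
  + by simpl; ring.
  + by right; right; right.
Qed.


Lemma ext_eq x y : D x -> D y -> extf x y = f x y.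
Proof.
move=> hx hy; apply/esym/near_eq => e e0.
have [d [d0 h]] := ext_approx x y e0.
by apply: h => //; rewrite subrr (ipr0 hip).
Qed.

Lemma dense_min d1 d2 x : 0 < d1 -> 0 < d2 -> exists a, [/\ D a, ipr (x - a) < d1 & ipr (x - a) < d2].
Proof.
move=> h1 h2; have dm : 0 < Num.min d1 d2 by rewrite lt_min h1 h2.
have [a [ha hxa]] := hdense x dm; exists a; split => //.
  by apply: lt_le_trans hxa _; rewrite ge_min lexx.
by apply: lt_le_trans hxa _; rewrite ge_min lexx orbT.
Qed.

Lemma Ka_ge0 (a : R[i]) : 0 <= cRe a ^+ 2 + cIm a ^+ 2.
Proof. by apply: addr_ge0; apply: sqr_ge0. Qed.

Lemma comb_bound (a : R[i]) d1 : 0 < d1 -> exists eta, 0 < eta /\ forall u v,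
  ipr u < eta -> ipr v < eta -> 2 * (cRe a ^+ 2 + cIm a ^+ 2) * ipr u + 2 * ipr v < d1 /\ eta <= d1.
Proof.
move=> d10; set Ka := cRe a ^+ 2 + cIm a ^+ 2.
have Ka0 : 0 <= Ka := Ka_ge0 a.
have k0 : 0 < 2 * Ka + 2 by lra.
exists (d1 / (2 * Ka + 2)); split; first by rewrite divr_gt0.
move=> u v hu hv.
have e : d1 / (2 * Ka + 2) * (2 * Ka + 2) = d1 by rewrite divfK // gt_eqF.
have hle : d1 / (2 * Ka + 2) <= d1.
  rewrite ler_pdivrMr //; rewrite -subr_ge0.
  have -> : d1 * (2 * Ka + 2) - d1 = d1 * (2 * Ka + 1) by ring.
  by apply: mulr_ge0; lra.
split => //.
have hu0 := ipr_ge0 hip u.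
have : 2 * Ka * ipr u <= 2 * Ka * (d1 / (2 * Ka + 2)).
  by apply: ler_wpM2l; [lra | apply: ltW].
lra.
Qed.

Lemma ext_lin1 a x y z : extf (a *: x + y) z = a * extf x z + extf y z.
Proof.
apply: near_lin => e e0.
have [d1 [d10 h1]] := ext_approx (a *: x + y) z e0.
have [d2 [d20 h2]] := ext_approx x z e0.
have [d3 [d30 h3]] := ext_approx y z e0.
have [eta [eta0 heta]] := comb_bound a d10.
have dm : 0 < Num.min d2 d3 by rewrite lt_min d20 d30.
have [a' [ha' hxa1 hxa2]] := dense_min x eta0 dm.
have [b' [hb' hyb1 hyb2]] := dense_min y eta0 dm.
have [c' [hc' hzc1 hzc2]] := dense_min z eta0 dm.
have [hcomb etad1] := heta _ _ hxa1 hyb1.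
have lt2 : forall t, t < Num.min d2 d3 -> t < d2.
  by move=> t ht; apply: lt_le_trans ht _; rewrite ge_min lexx.
have lt3 : forall t, t < Num.min d2 d3 -> t < d3.
  by move=> t ht; apply: lt_le_trans ht _; rewrite ge_min lexx orbT.
exists (f (a *: a' + b') c'), (f a' c'), (f b' c'); split.
- apply: near_sym; apply: h1 => //; first by apply: DZD.
    exact: le_lt_trans (ipr_combZ hip a x y a' b') hcomb.
  exact: lt_le_trans hzc1 etad1.
- by apply: near_sym; apply: h2 => //; [apply: lt2 | apply: lt2].
- by apply: near_sym; apply: h3 => //; [apply: lt3 | apply: lt3].
- by rewrite (fZDl hf).
Qed.

Lemma ext_lin2 a x y z : extf x (a *: y + z) = (a^*)%R * extf x y + extf x z.
Proof.
apply: near_lin => e e0.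
have [d1 [d10 h1]] := ext_approx x (a *: y + z) e0.
have [d2 [d20 h2]] := ext_approx x y e0.
have [d3 [d30 h3]] := ext_approx x z e0.
have [eta [eta0 heta]] := comb_bound a d10.
have dm : 0 < Num.min d2 d3 by rewrite lt_min d20 d30.
have [a' [ha' hxa1 hxa2]] := dense_min x eta0 dm.
have [b' [hb' hyb1 hyb2]] := dense_min y eta0 dm.
have [c' [hc' hzc1 hzc2]] := dense_min z eta0 dm.
have [hcomb etad1] := heta _ _ hyb1 hzc1.
have lt2 : forall t, t < Num.min d2 d3 -> t < d2.
  by move=> t ht; apply: lt_le_trans ht _; rewrite ge_min lexx.
have lt3 : forall t, t < Num.min d2 d3 -> t < d3.
  by move=> t ht; apply: lt_le_trans ht _; rewrite ge_min lexx orbT.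
exists (f a' (a *: b' + c')), (f a' b'), (f a' c'); split.
- apply: near_sym; apply: h1 => //; first by apply: DZD.
    exact: lt_le_trans hxa1 etad1.
  exact: le_lt_trans (ipr_combZ hip a y z b' c') hcomb.
- by apply: near_sym; apply: h2 => //; [apply: lt2 | apply: lt2].
- by apply: near_sym; apply: h3 => //; [apply: lt3 | apply: lt3].
- by rewrite (fZDr hf).
Qed.

Lemma ext_pos x : 0 <= extf x x.
Proof.
apply: near_ge0 => e e0.
have [d [d0 h]] := ext_approx x x e0.
have [a [ha hxa]] := hdense x d0.
by exists (f a a); split; [apply: hp | apply: near_sym; apply: h].
Qed.

Lemma ext_bnd x : ipr x = 1 -> extf x x <= (4 * M)%:C.
Proof.
move=> x1; apply: near_le => e e0.
have [d [d0 h]] := ext_approx x x e0.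
have [a [ha hxa hxa1]] := dense_min x d0 ltr01.
exists (f a a); split; last by apply: near_sym; apply: h.
rewrite (fxx_real hp ha) lecR.
have := ipr_add hip x (a - x); rewrite addrC subrK -(iprB_sym hip x a) x1 => ia.
have ia4 : ipr a <= 4 by lra.
have := hM ha; have := ler_wpM2l (ltW M0) ia4; lra.
Qed.

End F.
Section G.
Variables (R : realType) (H : lmodType R[i]) (ip : H -> H -> R[i]).
Hypothesis hip : is_inner_product ip.
Local Notation ipr := (ipr ip).
Local Notation Vf := (Vf ip).
Local Notation bounded := (bounded_form ip).
Local Notation fm := (@Pilot.Defs.form R H).

Lemma form_sesq t : is_form ip t -> sesq (dom t) (fval t).
Proof. by case=> hs _ h1 h2; split. Qed.

Lemma Vf_form t : Vf t -> is_form ip t. Proof. by case. Qed.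
Lemma Vf_sesq t : Vf t -> sesq (dom t) (fval t). Proof. by case=> h _ _; apply: form_sesq. Qed.
Lemma Vf_pos t : Vf t -> posf (dom t) (fval t). Proof. by case. Qed.
Lemma Vf_bnd t : Vf t -> bounded t -> forall x, dom t x. Proof. by case. Qed.

Definition extform (q : fm) : fm := Form (fun _ => True) (extf ip (dom q) (fval q)).

Definition normf (q : fm) : fm := if `[< bounded q >] then extform q else q.

Section Ext.
Variable q : fm.
Hypotheses (hq : is_form ip q) (hqp : posf (dom q) (fval q)) (hqb : bounded q).
Let hs := form_sesq hq.
Let hdn : forall x d, 0 < d -> exists a, dom q a /\ ipr (x - a) < d.
Proof. by case: hq => _ hd _ _; apply: dense_ipr. Qed.
Let hMb := bnd_of hip hs hqp hqb.

Lemma extform_Vf : Vf (extform q).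
Proof.
have [M [M0 hM]] := hMb.
split; last by [].
- split => //.
  + move=> x eps e0; exists x; split => //; rewrite subrr (normH0 hip) ltcR //.
  + by move=> a x y z _ _ _; apply: (ext_lin1 hip hs hqp hdn M0 hM).
  + by move=> a x y z _ _ _; apply: (ext_lin2 hip hs hqp hdn M0 hM).
- by move=> x _; apply: (ext_pos hip hs hqp hdn M0 hM).
Qed.

Lemma extform_bounded : bounded (extform q).
Proof.
have [M [M0 hM]] := hMb.
exists (4 * M) => x _ h1; apply: (ext_bnd hip hs hqp hdn M0 hM).
by rewrite /ipr /Qf h1.
Qed.

Lemma extform_eq x y : dom q x -> dom q y -> fval (extform q) x y = fval q x y.
Proof. by have [M [M0 hM]] := hMb; apply: (ext_eq hip hs hqp hdn M0 hM). Qed.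

End Ext.

Lemma normf_spec q : is_form ip q -> posf (dom q) (fval q) ->
 [/\ Vf (normf q),
     forall x, dom q x -> dom (normf q) x,
     forall x y, dom q x -> dom q y -> fval (normf q) x y = fval q x y &
     (bounded q /\ normf q = extform q) \/ (~ bounded q /\ normf q = q)].
Proof.
move=> hq hqp; rewrite /normf; case: asboolP => hb.
- split => //; first exact: extform_Vf.
  + by move=> x y hx hy; apply: extform_eq.
  + by left.
- by split => //; right.
Qed.

End G.
Section Hs.
Variables (R : realType) (H : lmodType R[i]) (ip : H -> H -> R[i]).
Hypothesis hip : is_inner_product ip.
Local Notation ipr := (ipr ip).
Local Notation Vf := (Vf ip).
Local Notation bounded := (bounded_form ip).
Local Notation fm := (@Pilot.Defs.form R H).
Local Notation le := (form_le ip).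

Lemma bounded_le (s t : fm) : (forall x, dom s x -> dom t x) ->
  (forall x, dom s x -> Qf (fval s) x <= Qf (fval t) x) ->
  posf (dom s) (fval s) -> posf (dom t) (fval t) -> bounded t -> bounded s.
Proof.
move=> hst hQ hps hpt [M hM]; exists M => x hx h1.
apply: le_trans (hM x (hst _ hx) h1).
by rewrite (fxx_real hps hx) (fxx_real hpt (hst _ hx)) lecR; apply: hQ.
Qed.

Lemma le_intro (t u : fm) : Vf t -> Vf u -> (forall x, dom u x -> dom t x) ->
  (forall x, dom u x -> Qf (fval t) x <= Qf (fval u) x) ->
  (bounded t \/ forall x, dom t x -> dom u x) -> le t u.
Proof.
move=> ht hu hut hQ hC.
have [hus hud hul1 hul2] := Vf_form hu.
have [hts htd htl1 htl2] := Vf_form ht.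
set q : fm := Form (dom u) (fun x y => fval u x y - fval t x y).
have hq : is_form ip q.
  split => //=.
  - move=> a x y z hx hy hz.
    have hx' := hut _ hx; have hy' := hut _ hy; have hz' := hut _ hz.
    rewrite hul1 // htl1 //; ring.
  - move=> a x y z hx hy hz.
    have hx' := hut _ hx; have hy' := hut _ hy; have hz' := hut _ hz.
    rewrite hul2 // htl2 //; ring.
have hqp : posf (dom q) (fval q).
  move=> x /= hx; rewrite (fxx_real (Vf_pos hu) hx) (fxx_real (Vf_pos ht) (hut _ hx)).
  by rewrite -rmorphB ler0c subr_ge0; apply: hQ.
have [hr1 hr2 hr3 hr4] := normf_spec hip hq hqp.
have hdom : forall x, dom t x /\ dom (normf ip q) x <-> dom u x.
  move=> x; split; last by move=> hx; split; [apply: hut | apply: hr2].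
  case=> htx hrx; case: hr4 => [[hb e]|[hb e]]; last by rewrite e in hrx.
  case: hC => [hbt|] ; last by apply.
  apply: (Vf_bnd hu).
  have [Mt hMt] := hbt; have [Mq hMq] := hb.
  exists (Mt + Mq) => y hy h1.
  have -> : fval u y y = fval t y y + fval q y y by rewrite /=; ring.
  by rewrite rmorphD; apply: lerD; [apply: hMt => //; apply: hut | apply: hMq].
exists (normf ip q); split => //.
- case: hr4 => [[hb e]|[hb e]]; first by rewrite e; apply: Or32; apply: extform_bounded.
  case: hC => [hbt|hsub]; first by apply: Or31.
  apply: Or33 => x; rewrite e /=; split; [exact: hsub | exact: hut].
- split => //= x y hx hy.
  have hx' : dom u x by apply/hdom.
  have hy' : dom u y by apply/hdom.
  by rewrite hr3 //=; ring.
Qed.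

Lemma le_elim (t u : fm) : Vf t -> Vf u -> le t u ->
  [/\ (forall x, dom u x -> dom t x),
      (forall x, dom u x -> Qf (fval t) x <= Qf (fval u) x) &
      (bounded t \/ forall x, dom t x -> dom u x)].
Proof.
move=> ht hu [r [hr hor [hd hv]]].
split.
- by move=> x /hd [].
- move=> x hx; have [htx hrx] := (hd x).2 hx.
  have := hv x x ((hd x).2 hx) ((hd x).2 hx) => /= e.
  rewrite /Qf -e ReD lerDl; exact: (Qf_ge0 (Vf_pos hr) hrx).
- case: hor => [hb|hb|he]; first by left.
  + by right => x htx; apply/hd; split => //; apply: (Vf_bnd hr).
  + by right => x htx; apply/hd; split => //; apply/he.
Qed.

Lemma le_trans' (t s u : fm) : Vf t -> Vf s -> Vf u -> le t s -> le s u -> le t u.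
Proof.
move=> ht hs hu h1 h2.
have [d1 q1 c1] := le_elim ht hs h1.
have [d2 q2 c2] := le_elim hs hu h2.
apply: le_intro => //.
- by move=> x hx; apply: d1; apply: d2.
- by move=> x hx; apply: le_trans (q1 _ (d2 _ hx)) (q2 _ hx).
- case: (pselect (bounded t)) => hbt; first by left.
  right => x hx.
  case: c1 => [//|c1].
  case: c2 => [hbs|c2]; last by apply: c2; apply: c1.
  exfalso; apply: hbt; apply: (bounded_le (t := s) c1 _ (Vf_pos ht) (Vf_pos hs) hbs).
  by move=> y hy; apply: q1; apply: c1.
Qed.

Lemma le_refl' (t : fm) : Vf t -> le t t.
Proof. by move=> ht; apply: le_intro => //; right. Qed.

End Hs.
Section I.
Variables (R : realType) (H : lmodType R[i]) (ip : H -> H -> R[i]).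
Hypothesis hip : is_inner_product ip.
Local Notation ipr := (ipr ip).
Local Notation Vf := (Vf ip).
Local Notation bounded := (bounded_form ip).
Local Notation fm := (@Pilot.Defs.form R H).
Local Notation le := (form_le ip).

Variable v : nat -> fm.
Hypotheses (hv : forall n, Vf (v n)) (hle : forall n, le (v n.+1) (v n))
  (hdom : forall n x, dom (v n) x <-> dom (v 0) x).

Let D := dom (v 0).
Let hD : is_subspace D. Proof. by case: (Vf_form (hv 0)). Qed.
Let hDd : dense ip D. Proof. by case: (Vf_form (hv 0)). Qed.
Let inD n x : D x -> dom (v n) x. Proof. by move=> hx; apply/(hdom n x). Qed.

Let mono n m : (n <= m)%N -> forall x, D x -> Qf (fval (v m)) x <= Qf (fval (v n)) x.
Proof.
elim: m => [|m IH]; first by rewrite leqn0 => /eqP -> x _.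
rewrite leq_eqVlt => /orP[/eqP -> //|]; rewrite ltnS => hnm x hx.
have [_ q _] := le_elim (hv m.+1) (hv m) (hle m).
by apply: le_trans (q _ (inD m hx)) (IH hnm x hx).
Qed.

Let monoC n m : (n <= m)%N -> forall x, D x -> fval (v m) x x <= fval (v n) x x.
Proof.
move=> hnm x hx; rewrite (fxx_real (Vf_pos (hv m)) (inD m hx)).
by rewrite (fxx_real (Vf_pos (hv n)) (inD n hx)) lecR; apply: mono.
Qed.

Definition Lq x := inf [set y : R | exists n, y = Qf (fval (v n)) x].

Let conv x eps : D x -> 0 < eps -> exists N, forall n, (N <= n)%N ->
  `|Qf (fval (v n)) x - Lq x| < eps.
Proof.
move=> hx e0.
set S := [set y : R | exists n, y = Qf (fval (v n)) x].
have lb : lbound S 0.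
  by move=> y [n ->]; apply: (Qf_ge0 (Vf_pos (hv n))); apply: inD.
have ne : S (Qf (fval (v 0)) x) by exists 0%N.
have hinf : has_inf S by split; [exact: (ex_intro _ _ ne) | exact: (ex_intro _ _ lb)].
have [y [N ->] hy] := inf_adherent e0 hinf.
exists N => n hn.
have h1 : Lq x <= Qf (fval (v n)) x by apply: (ge_inf (ex_intro _ _ lb)); exists n.
have h2 := mono hn hx.
apply/absP; rewrite /Lq -/S; rewrite /Lq -/S in h1; lra.
Qed.

Definition t0 : fm := Form D (fun x y =>
  polarR (Lq (x + y)) (Lq (x - y)) (Lq (x + 'i%C *: y)) (Lq (x - 'i%C *: y))).

Let approx0 x y eps : D x -> D y -> 0 < eps -> exists N, forall n, (N <= n)%N ->
  near (fval (v n) x y) (fval t0 x y) eps.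
Proof.
move=> hx hy e0.
have [N1 h1] := conv (DD hD hx hy) e0.
have [N2 h2] := conv (DB hD hx hy) e0.
have [N3 h3] := conv (DD hD hx (DZ hD 'i%C hy)) e0.
have [N4 h4] := conv (DB hD hx (DZ hD 'i%C hy)) e0.
exists (maxn (maxn N1 N2) (maxn N3 N4)) => n.
rewrite !geq_max => /andP[/andP[n1 n2] /andP[n3 n4]].
rewrite (polar_id (Vf_sesq (hv n)) (Vf_pos (hv n)) (inD n hx) (inD n hy)) /=.
by apply: polar_near; [apply: h1 | apply: h2 | apply: h3 | apply: h4].
Qed.

Let approx2 x y x' y' x'' y'' eps : D x -> D y -> D x' -> D y' -> D x'' -> D y'' -> 0 < eps ->
  exists n, [/\ near (fval (v n) x y) (fval t0 x y) eps,
                near (fval (v n) x' y') (fval t0 x' y') eps &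
                near (fval (v n) x'' y'') (fval t0 x'' y'') eps].
Proof.
move=> hx hy hx' hy' hx'' hy'' e0.
have [N1 h1] := approx0 hx hy e0.
have [N2 h2] := approx0 hx' hy' e0.
have [N3 h3] := approx0 hx'' hy'' e0.
exists (maxn N1 (maxn N2 N3)); split; [apply: h1 | apply: h2 | apply: h3];
  rewrite ?leq_maxl //; apply: leq_trans (leq_maxr _ _); rewrite ?leq_maxl ?leq_maxr //.
Qed.

Lemma t0_form : is_form ip t0.
Proof.
split => //=.
- move=> a x y z hx hy hz; apply: near_lin => e e0.
  have hax := DZD hD a hx hy.
  have [n [h1 h2 h3]] := approx2 hax hz hx hz hy hz e0.
  exists (fval (v n) (a *: x + y) z), (fval (v n) x z), (fval (v n) y z); split.
  + exact: near_sym.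
  + exact: near_sym.
  + exact: near_sym.
  + by rewrite (fZDl (Vf_sesq (hv n))) //; apply: inD.
- move=> a x y z hx hy hz; apply: near_lin => e e0.
  have hay := DZD hD a hy hz.
  have [n [h1 h2 h3]] := approx2 hx hay hx hy hx hz e0.
  exists (fval (v n) x (a *: y + z)), (fval (v n) x y), (fval (v n) x z); split.
  + exact: near_sym.
  + exact: near_sym.
  + exact: near_sym.
  + by rewrite (fZDr (Vf_sesq (hv n))) //; apply: inD.
Qed.

Lemma t0_pos : posf (dom t0) (fval t0).
Proof.
move=> x /= hx; apply: near_ge0 => e e0.
have [N h] := approx0 hx hx e0.
exists (fval (v N) x x); split; first by apply: (Vf_pos (hv N)); apply: inD.
by apply: near_sym; apply: h.
Qed.

Lemma t0_le n x : D x -> fval t0 x x <= fval (v n) x x.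
Proof.
move=> hx; apply: near_le => e e0.
have [N h] := approx0 hx hx e0.
exists (fval (v (maxn N n)) x x); split.
  by apply: monoC => //; apply: leq_maxr.
by apply: near_sym; apply: h; apply: leq_maxl.
Qed.

Definition T := normf ip t0.

Lemma core :
  [/\ Vf T, (forall n, le T (v n)) &
      forall s, Vf s -> (forall n, le s (v n)) -> le s T].
Proof.
have [hr1 hr2 hr3 hr4] := normf_spec hip t0_form t0_pos.
split => //.
- move=> n; apply: le_intro => //.
  + by move=> x hx; apply: hr2; apply/(hdom n x).
  + move=> x hx; have hx' : D x by apply/(hdom n x).
    by rewrite /Qf hr3 //; apply: Re_le; apply: t0_le.
  + case: hr4 => [[hb e]|[hb e]].
      by left; rewrite /T e; apply: extform_bounded => //; [exact: t0_form | exact: t0_pos].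
    by right => x; rewrite /T e /= => hx; apply: inD.
- move=> s hs hsl.
  have [ds0 qs0 cs0] := le_elim hs (hv 0) (hsl 0).
  have s_le : forall x, D x -> fval s x x <= fval t0 x x.
    move=> x hx; rewrite -subr_ge0; apply: near_ge0 => e e0.
    have [N h] := approx0 hx hx e0.
    have [dsN qsN _] := le_elim hs (hv N) (hsl N).
    exists (fval (v N) x x - fval s x x); split.
      rewrite (fxx_real (Vf_pos (hv N)) (inD N hx)) (fxx_real (Vf_pos hs) (ds0 _ hx)).
      by rewrite -rmorphB ler0c subr_ge0; apply: qsN; apply: inD.
    exact: near_subr (near_sym (h N (leqnn N))).
  have sQ : forall x, D x -> Qf (fval s) x <= Qf (fval t0) x by move=> x hx; apply: Re_le; apply: s_le.
  have sall : bounded t0 -> bounded s /\ forall x, dom s x.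
    move=> hb0.
    case: (pselect (bounded s)) => hbs; first by split => //; apply: (Vf_bnd hs).
    exfalso; case: cs0 => // cs0.
    apply: hbs; apply: (bounded_le (t := t0)) => //.
    + by move=> x hx; apply: sQ; apply: cs0.
    + exact: (Vf_pos hs).
    + exact: t0_pos.
  apply: le_intro => //.
  + case: hr4 => [[hb e]|[hb e]]; first by move=> x _; apply: (sall hb).2.
    by rewrite /T e => x /= hx; apply: ds0.
  + case: hr4 => [[hb e]|[hb e]]; last by rewrite /T e => x /= hx; apply: sQ.
    have [hbs hsa] := sall hb.
    move=> x _; apply: Re_le; rewrite /T e /=.
    rewrite -subr_ge0; apply: near_ge0 => eps e0.
    have e2 : 0 < eps / 2 by rewrite divr_gt0.
    have [Ms [Ms0 hMs]] := bnd_of hip (Vf_sesq hs) (Vf_pos hs) hbs.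
    have [d1 [d10 _ hosc]] := osc hip (Vf_sesq hs) (Vf_pos hs) Ms0 hMs x e2.
    have hdn := dense_ipr hip hDd.
    have [M [M0 hM]] := bnd_of hip (form_sesq t0_form) t0_pos hb.
    have [d2 [d20 hap]] := ext_approx hip (form_sesq t0_form) t0_pos hdn M0 hM x x e2.
    have dm : 0 < Num.min d1 d2 by rewrite lt_min d10 d20.
    have [a [ha hxa]] := hdn x _ dm.
    have hxa1 : ipr (x - a) < d1 by apply: lt_le_trans hxa _; rewrite ge_min lexx.
    have hxa2 : ipr (x - a) < d2 by apply: lt_le_trans hxa _; rewrite ge_min lexx orbT.
    exists (fval t0 a a - fval s a a); split; first by rewrite subr_ge0; apply: s_le.
    have n1 := near_sym (hap a a ha ha hxa2 hxa2).
    have n2 : near (fval s x x) (fval s a a) (eps / 2).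
      rewrite (fxx_real (Vf_pos hs) (hsa x)) (fxx_real (Vf_pos hs) (hsa a)).
      apply: near_real => //.
      by apply: (hosc _ _ (hsa x) (hsa a)) => //; rewrite subrr (ipr0 hip).
    have := near_add n1 (near_opp n2).
    by rewrite -splitr.
  + case: cs0 => [hbs|cs0]; first by left.
    by right => x hx; apply: hr2; apply: cs0.
Qed.

End I.
Theorem theorem5p2 (R : realType) (H : lmodType R[i]) (ip : H -> H -> R[i]) :
  is_inner_product ip -> hilbert_complete ip -> infinite_dimensional H ->
  monotone_downwards_sigma_complete ip.
Proof.
move=> hip _ _ u hu hle.
have chain : forall n m, (n <= m)%N -> form_le ip (u m) (u n).
  move=> n m; elim: m => [|m IH].
    by rewrite leqn0 => /eqP ->; apply: (le_refl' hip).
  rewrite leq_eqVlt => /orP[/eqP ->|]; first by apply: (le_refl' hip).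
  by rewrite ltnS => hnm; apply: (le_trans' hip (hu _) (hu _) (hu _) (hle m) (IH hnm)).
have [k hk] : exists k, forall n x, dom (u (n + k)%N) x <-> dom (u k) x.
  case: (pselect (exists k, bounded_form ip (u k))) => [[k hk]|nb].
    exists k.
    have all : forall n, bounded_form ip (u (n + k)%N) /\ forall x, dom (u (n + k)%N) x.
      elim=> [|n [IHb IHd]]; first by split => //; apply: (Vf_bnd (hu k)).
      rewrite addSn.
      have [d q _] := le_elim (hu _) (hu _) (hle (n + k)%N).
      have hd : forall x, dom (u (n + k).+1%N) x by move=> x; apply: d.
      split => //.
      apply: (bounded_le (t := u (n + k)%N) _ _ (Vf_pos (hu _)) (Vf_pos (hu _))) => //.
      by move=> x _; apply: q.
    by move=> n x; split => _; [apply: (Vf_bnd (hu k)) | apply: (all n).2].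
  exists 0%N => n x; rewrite addn0.
  elim: n => [|n IH] //.
  have [d _ c] := le_elim (hu _) (hu _) (hle n).
  case: c => [hb|c]; first by exfalso; apply: nb; exists n.+1.
  by split => [hx|hx]; [apply/IH; apply: c | apply: d; apply/IH].
set v := fun n => u (n + k)%N.
have hv : forall n, Vf ip (v n) by move=> n; apply: hu.
have hlev : forall n, form_le ip (v n.+1) (v n) by move=> n; rewrite /v addSn; apply: hle.
have hdv : forall n x, dom (v n) x <-> dom (v 0) x by move=> n x; rewrite /v add0n; apply: hk.
have [h1 h2 h3] := core hip hv hlev hdv.
exists (T ip v); split => //.
- move=> n; case: (leqP k n) => hkn.
    by have := h2 (n - k)%N; rewrite /v subnK.
  apply: (le_trans' hip h1 (hu k) (hu n)); first by have := h2 0%N; rewrite /v add0n.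
  by apply: chain; apply: ltnW.
- by move=> s hs hsl; apply: h3 => // n; apply: hsl.
Qed.
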